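(* Let $S$ be a graded reduced affine monoid and $\tilde S$ as in the context. Suppose $\alpha,\beta\in\mathbb{N}_0^{\mathcal{A}(\tilde S)}$ satisfy $\kappa(\alpha)=\kappa(\beta)$ and $\delta(\alpha)=\delta(\beta)$. Then $x^{\alpha}\sim x^{\beta}$, where $\sim$ is the semigroup congruence on the free commutative monoid $\tilde M=\{x^{\alpha}\mid\alpha\in\mathbb{N}_0^{\mathcal{A}(\tilde S)}\}$ generated by $\{(x_{a[k]}x_{b[l]},\,x_{a[k+1]}x_{b[l-1]})\mid a,b\in\mathcal{A}(S),\ 0\le k\le|a|-1,\ 1\le l\le|b|\}$.
   Context: A monoid is a commutative cancellative semigroup with identity; affine means a finitely generated submonoid of a finitely generated free abelian group; reduced means the identity is the only unit. $S$ (written multiplicatively) is graded: $S=\bigsqcup_{d\in\mathbb{N}_0}S_d$ with $S_dS_e\subseteq S_{d+e}$, and $|s|=d$ for $s\in S_d$ (not necessarily connected). $\mathcal{A}(S)$ is the set of atoms of $S$. Define $\tilde S=\{s[i]\mid s\in S,\ 0\le i\le|s|\}$ with multiplication $s[i]\cdot t[j]=(st)[i+j]$ (a submonoid of $S\times\mathbb{N}_0$); its atoms are $\mathcal{A}(\tilde S)=\{a[i]\mid a\in\mathcal{A}(S),\ 0\le i\le|a|\}$. $\tilde M$ is the free commutative monoid on indeterminates $x_{a[i]}$, $a[i]\in\mathcal{A}(\tilde S)$, with $x^{\alpha}=\prod x_{a[i]}^{\alpha(a[i])}$. Define $\kappa:\mathbb{N}_0^{\mathcal{A}(\tilde S)}\to\mathbb{N}_0^{\mathcal{A}(S)}$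 by $\kappa(\lambda)(a)=\sum_{i=0}^{|a|}\lambda(a[i])$, and $\delta:\mathbb{N}_0^{\mathcal{A}(\tilde S)}\to\mathbb{N}_0$ by $\delta(\lambda)=\sum_{a[i]\in\mathcal{A}(\tilde S)}i\,\lambda(a[i])$. *)

(* Defs.v *)
From mathcomp Require Import all_boot all_order all_algebra.
From mathcomp Require Import finmap multiset.
Set Implicit Arguments. Unset Strict Implicit. Unset Printing Implicit Defensive.
Import GRing.Theory.
Local Open Scope ring_scope.

(* An affine monoid S, written additively, inside the free abelian group Z^n
   ('rV[int]_n), given by a finite generating set gens. *)
Definition inS (n : nat) (gens : seq 'rV[int]_n) (v : 'rV[int]_n) : Prop :=
  exists c : 'I_(size gens) -> nat, v = \sum_(i < size gens) (gens`_i *+ c i).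

Definition reduced (n : nat) (gens : seq 'rV[int]_n) : Prop :=
  forall s t, inS gens s -> inS gens t -> s + t = 0 -> s = 0.

(* graded: a degree function |.| : S -> N_0 with |s t| = |s| + |t|
   (i.e. S = disjoint union of the S_d with S_d S_e ⊆ S_{d+e}) *)
Definition grading (n : nat) (gens : seq 'rV[int]_n) (deg : 'rV[int]_n -> nat)
  : Prop :=
  forall s t, inS gens s -> inS gens t -> deg (s + t) = (deg s + deg t)%N.

Definition atom (n : nat) (gens : seq 'rV[int]_n) (a : 'rV[int]_n) : Prop :=
  [/\ inS gens a, a <> 0 &
      forall t u, inS gens t -> inS gens u -> a = t + u -> t = 0 \/ u = 0].

(* atoms of S~ : a[i] with a an atom and 0 <= i <= |a|, encoded as (a, i) *)
Definition atomt (n : nat) (gens : seq 'rV[int]_n) (deg : 'rV[int]_n -> nat)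
  (x : 'rV[int]_n * nat) : Prop :=
  atom gens x.1 /\ (x.2 <= deg x.1)%N.

(* elements of M~ = N_0^{A(S~)}: finitely supported multiplicity functions
   (multisets) supported in A(S~); x^alpha is identified with alpha and
   multiplication in M~ with multiset sum. *)
Definition inMt (n : nat) (gens : seq 'rV[int]_n) (deg : 'rV[int]_n -> nat)
  (al : (multiset ('rV[int]_n * nat)%type)) : Prop :=
  forall x, x \in finsupp al -> atomt gens deg x.

Definition kappa (n : nat) (deg : 'rV[int]_n -> nat)
  (al : (multiset ('rV[int]_n * nat)%type)) (a : 'rV[int]_n) : nat :=
  (\sum_(i < (deg a).+1) al (a, (i : nat)))%N.

Definition delta (n : nat) (al : (multiset ('rV[int]_n * nat)%type)) : nat :=
  (\sum_(x <- finsupp al) x.2 * al x)%N.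

Inductive cong (n : nat) (gens : seq 'rV[int]_n) (deg : 'rV[int]_n -> nat)
  : (multiset ('rV[int]_n * nat)%type) -> (multiset ('rV[int]_n * nat)%type) -> Prop :=
| cong_gen a b k l :
    atom gens a -> atom gens b -> (k < deg a)%N -> (1 <= l <= deg b)%N ->
    cong gens deg [mset (a, k); (b, l)]%mset [mset (a, k.+1); (b, l.-1)]%mset
| cong_refl al : inMt gens deg al -> cong gens deg al al
| cong_sym al be : cong gens deg al be -> cong gens deg be al
| cong_trans al be ga :
    cong gens deg al be -> cong gens deg be ga -> cong gens deg al ga
| cong_add al be ga : inMt gens deg ga ->
    cong gens deg al be -> cong gens deg (al `+` ga)%mset (be `+` ga)%mset.

(* Main.v *)
Require Import Defs.
From mathcomp Require Import all_boot all_order all_algebra.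
From mathcomp Require Import finmap multiset.
From mathcomp Require Import zify.

Section Helpers.
Variables (n : nat) (gens : seq 'rV[int]_n) (deg : 'rV[int]_n -> nat).
Local Notation M := (multiset ('rV[int]_n * nat)%type).
Local Open Scope nat_scope.
Local Open Scope mset_scope.

Lemma sumD (F : _ -> nat) (A B : M) :
  \sum_(x <- (A `+` B)%mset) F x = \sum_(x <- A) F x + \sum_(x <- B) F x.
Proof.
rewrite -big_cat; apply: perm_big; rewrite /perm_eq; apply/allP => x _ /=.
by rewrite count_cat !count_mem_mset msetE2 eqxx.
Qed.

Lemma sum1 (F : _ -> nat) x : \sum_(y <- ([mset x] : M)) F y = F x.
Proof. by rewrite enum_msetn /= big_seq1. Qed.

Lemma deltaE (A : M) : delta A = \sum_(x <- A) x.2.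
Proof. by rewrite /delta sum_mset; apply: eq_bigr => x _; rewrite mulnC. Qed.

Lemma sizeE (A : M) : size A = \sum_(x <- A) 1.
Proof. by rewrite sum1_size. Qed.

Lemma kappaD (A B : M) c : kappa deg (A `+` B)%mset c = kappa deg A c + kappa deg B c.
Proof. by rewrite /kappa -big_split; apply: eq_bigr => i _; rewrite msetE2. Qed.

Lemma kappa1 x c : kappa deg ([mset x] : M) c = ((x.1 == c) && (x.2 <= deg c)).
Proof.
rewrite /kappa; case: x => a k /=.
have [<-|ac] := eqVneq a c; last first.
  by rewrite big1 // => i _; rewrite msetnE xpair_eqE [c == a]eq_sym (negbTE ac).
case: (leqP k (deg a)) => hk /=.
  rewrite (bigD1 (Ordinal (hk : k < (deg a).+1))) //= msetnE eqxx big1 // => i hi.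
  rewrite msetnE xpair_eqE eqxx /=.
  case: eqP => // ei; move: hi; suff -> : i = Ordinal (hk : k < (deg a).+1) by rewrite eqxx.
  by apply: val_inj.
rewrite big1 // => i _; rewrite msetnE xpair_eqE eqxx /=.
case: eqP => // ei; have := ltn_ord i; rewrite ei; lia.
Qed.

Lemma inMtD (A B : M) : inMt gens deg A -> inMt gens deg B -> inMt gens deg (A `+` B)%mset.
Proof. by move=> HA HB x; rewrite msuppE in_msetD -!msuppE => /orP[/HA|/HB]. Qed.

Lemma inMtDl (A B : M) : inMt gens deg (A `+` B)%mset -> inMt gens deg A.
Proof. by move=> H x hx; apply: H; rewrite msuppE in_msetD; rewrite msuppE in hx; rewrite hx. Qed.

Lemma inMtDr (A B : M) : inMt gens deg (A `+` B)%mset -> inMt gens deg B.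
Proof. by move=> H x hx; apply: H; rewrite msuppE in_msetD; rewrite msuppE in hx; rewrite hx orbT. Qed.

Lemma inMt1 x : atomt gens deg x -> inMt gens deg ([mset x] : M).
Proof. by move=> h y; rewrite msuppE in_mset1 => /eqP->. Qed.

Lemma inMt_mem {A : M} {x} : inMt gens deg A -> x \in A -> atomt gens deg x.
Proof. by move=> H hx; apply: H; rewrite msuppE. Qed.

Lemma mem_delta {x} {A : M} : x \in A -> x.2 <= delta A.
Proof. by move=> H; rewrite deltaE -(msetB1K H) sumD sum1 leq_addr. Qed.

Lemma mem_kappa {a i} {A : M} : (a, i) \in A -> i <= deg a -> 0 < kappa deg A a.
Proof. by move=> H hi; rewrite -(msetB1K H) kappaD kappa1 /= eqxx hi. Qed.

Lemma kappa_pos a (A : M) : 0 < kappa deg A a -> exists j, (a, j) \in A /\ j <= deg a.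
Proof.
rewrite /kappa => H.
case: (pickP (fun i : 'I_(deg a).+1 => (a, val i) \in A)) => [i Hi|H0].
  by exists (val i); split => //; rewrite -ltnS ltn_ord.
move: H; rewrite big1 // => i _; apply/mset_eq0P; by rewrite H0.
Qed.

Lemma size2 x y (R : M) : size ([mset x; y] `+` R) = (size R).+2.
Proof. by rewrite sizeE sumD sumD !sum1 -sizeE. Qed.

Lemma delta2 x y (R : M) : delta ([mset x; y] `+` R) = x.2 + y.2 + delta R.
Proof. by rewrite !deltaE sumD sumD !sum1. Qed.

Lemma kappa2 x y (R : M) c : kappa deg ([mset x; y] `+` R) c =
  kappa deg [mset x] c + kappa deg [mset y] c + kappa deg R c.
Proof. by rewrite !kappaD. Qed.

Lemma step {ga : M} {a j} : inMt gens deg ga -> (a, j) \in ga -> atom gens a ->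
  j < deg a -> j < delta ga ->
  exists ga', [/\ cong gens deg ga ga', inMt gens deg ga', (a, j.+1) \in ga',
    (forall c, kappa deg ga' c = kappa deg ga c) &
    delta ga' = delta ga /\ size ga' = size ga].
Proof.
move=> Hg Hin Ha Hj Hd.
have [rest Eg] : exists rest, ga = ((a, j) +` rest)%mset.
  by exists (ga `\ (a, j))%mset; rewrite msetB1K.
subst ga.
have Hr : inMt gens deg rest by apply: inMtDr Hg.
have Hpos : 0 < delta rest.
  by move: Hd; rewrite !deltaE sumD sum1 /= -{1}[j]addn0 ltn_add2l.
have [[b l] Hbl Hl] : exists2 y, y \in rest & 0 < y.2.
  apply/hasP; move: Hpos; rewrite deltaE; apply: contraLR => /hasPn H.
  rewrite -leqNgt leqn0; apply/eqP; rewrite big1_seq // => y /andP[_ /H].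
  by rewrite lt0n negbK => /eqP.
have [Hb Hlb] := inMt_mem Hr Hbl.
have [rest' Er] : exists rest', rest = ((b, l) +` rest')%mset.
  by exists (rest `\ (b, l))%mset; rewrite msetB1K.
subst rest.
have Hr' : inMt gens deg rest' by apply: inMtDr Hr.
rewrite msetDA.
exists (([mset (a, j.+1); (b, l.-1)] `+` rest')%mset : M); split.
- apply: cong_add => //; apply: cong_gen => //.
  by rewrite Hl.
- apply: inMtD => //; apply: inMtD; apply: inMt1; split => //=.
  by apply: leq_trans (leq_pred l) Hlb.
- by rewrite !in_msetD in_mset1 eqxx.
- move=> c; apply: etrans (kappa2 _ _ _ _) _; apply: etrans _ (esym (kappa2 _ _ _ _)).
  rewrite !kappa1 /=; congr (_ + _ + _).
    by have [<-|] := eqVneq a c; rewrite ?Hj ?(ltnW Hj).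
  have [<-|] := eqVneq b c => //=; rewrite Hlb.
  by rewrite (leq_trans (leq_pred l) Hlb).
- split.
    apply: etrans (delta2 _ _ _) _; apply: etrans _ (esym (delta2 _ _ _)).
    by rewrite /= addSnnS prednK.
  exact: etrans (size2 _ _ _) (esym (size2 _ _ _)).
Qed.

Lemma shift d : forall {ga : M} {j a}, inMt gens deg ga -> (a, j) \in ga -> atom gens a ->
  j + d <= deg a -> j + d <= delta ga ->
  exists ga', [/\ cong gens deg ga ga', inMt gens deg ga', (a, j + d) \in ga',
    (forall c, kappa deg ga' c = kappa deg ga c) &
    delta ga' = delta ga /\ size ga' = size ga].
Proof.
elim: d => [|d IH] ga j a Hg Hin Ha Hdeg Hdel.
  by exists ga; rewrite addn0; split => //; apply: cong_refl.
have hj : j < j + d.+1 by rewrite addnS ltnS leq_addr.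
have [||ga1 [C1 I1 M1 K1 [D1 S1]]] := step Hg Hin Ha.
- exact: leq_trans hj Hdeg.
- exact: leq_trans hj Hdel.
have [||ga2 [C2 I2 M2 K2 [D2 S2]]] := IH ga1 j.+1 a I1 M1 Ha.
- by rewrite addSnnS.
- by rewrite D1 addSnnS.
exists ga2; rewrite -addSnnS; split => //.
- exact: cong_trans C1 C2.
- by move=> c; rewrite K2 K1.
- by rewrite D2 D1 S2 S1.
Qed.

Lemma mainN N : forall al be : M, size al = N ->
  inMt gens deg al -> inMt gens deg be ->
  (forall a, atom gens a -> kappa deg al a = kappa deg be a) ->
  delta al = delta be -> cong gens deg al be.
Proof.
elim: N => [|N IH] al be Hs Hal Hbe Hk Hd.
  have Eal : al = mset0 by apply/eqP; rewrite -size_mset_eq0 Hs.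
  case: (mset_0Vmem be) => [->|[[a j] Hj]].
    by rewrite Eal; apply: cong_refl; rewrite -Eal.
  have [Ha Hjd] := inMt_mem Hbe Hj.
  have := mem_kappa Hj Hjd; rewrite -Hk // Eal /kappa big1 // => i _.
  by rewrite mset0E.
have common : forall (al be : M) x, x \in al -> x \in be -> size al = N.+1 ->
  inMt gens deg al -> inMt gens deg be ->
  (forall a, atom gens a -> kappa deg al a = kappa deg be a) ->
  delta al = delta be -> cong gens deg al be.
  move=> al' be' x Ha Hb Hs' Hal' Hbe' Hk' Hd'.
  have [A EA] : exists A, al' = (x +` A)%mset by exists (al' `\ x)%mset; rewrite msetB1K.
  have [B EB] : exists B, be' = (x +` B)%mset by exists (be' `\ x)%mset; rewrite msetB1K.
  subst al' be'.
  rewrite (msetDC [mset x] A) (msetDC [mset x] B).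
  have Hx := inMt_mem Hal' (mset1D1 x A).
  apply: cong_add; first exact: inMt1.
  apply: IH.
  - by move: Hs'; rewrite sizeE sumD sum1 -sizeE add1n => -[].
  - exact: inMtDr Hal'.
  - exact: inMtDr Hbe'.
  - move=> c Hc; move: (Hk' c Hc); rewrite (kappaD [mset x] A) (kappaD [mset x] B).
    by move/eqP; rewrite eqn_add2l => /eqP.
  - move: Hd'; rewrite !deltaE (sumD _ [mset x] A) (sumD _ [mset x] B).
    by move/eqP; rewrite eqn_add2l => /eqP.
have [Ealt|[[a i] Hi]] := mset_0Vmem al.
  by move: Hs; rewrite Ealt size_mset0.
have [Ha Hid] := inMt_mem Hal Hi.
have [j [Hj Hjd]] : exists j, (a, j) \in be /\ j <= deg a.
  by apply: kappa_pos; rewrite -Hk //; apply: mem_kappa Hi Hid.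
have [lij|lji|eij] := ltngtP i j.
- have eji : i + (j - i) = j by rewrite subnKC // ltnW.
  have [||al2 [C2 I2 M2 K2 [D2 S2]]] := shift (j - i) Hal Hi Ha.
  + by rewrite eji.
  + rewrite eji Hd; exact: (mem_delta Hj).
  rewrite eji in M2.
  apply: cong_trans C2 _; apply: (common _ _ _ M2 Hj) => //.
  + by rewrite S2.
  + by move=> c Hc; rewrite K2 Hk.
  + by rewrite D2.
- have eij : j + (i - j) = i by rewrite subnKC // ltnW.
  have [||be2 [C2 I2 M2 K2 [D2 S2]]] := shift (i - j) Hbe Hj Ha.
  + by rewrite eij.
  + rewrite eij -Hd; exact: (mem_delta Hi).
  rewrite eij in M2.
  apply: cong_trans (cong_sym C2); apply: (common _ _ _ Hi M2) => //.
  + by move=> c Hc; rewrite K2 Hk.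
  + by rewrite D2.
- by rewrite eij in Hi; apply: (common _ _ _ Hi Hj).
Qed.

End Helpers.

Theorem lemma4p2 (n : nat) (gens : seq 'rV[int]_n) (deg : 'rV[int]_n -> nat)
  (Hred : reduced gens) (Hgr : grading gens deg)
  (al be : (multiset ('rV[int]_n * nat)%type))
  (Hal : inMt gens deg al) (Hbe : inMt gens deg be)
  (Hkappa : forall a, atom gens a -> kappa deg al a = kappa deg be a)
  (Hdelta : delta al = delta be) :
  cong gens deg al be.
Proof. exact: (@mainN n gens deg (size al) al be erefl Hal Hbe Hkappa Hdelta). Qed.
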